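(* There is an uncountable set of triples of decision points $(d_1,d_2,d_3)\in(0,1)^3$ for each of which the triangle process has a nonperiodic trajectory.
   Context: Triangle process. Fix $\lambda_1,\lambda_2,\lambda_3>0$, $\mu_1,\mu_2,\mu_3>0$ with $\rho_i:=\lambda_i/\mu_i<1$ for each $i$ and $\rho_1+\rho_2+\rho_3>1$. Put $\theta_j:=\mu_j^{-1}(\lambda_1+\lambda_2+\lambda_3)-1$. Let $e_1,e_2,e_3$ be the standard basis of $\mathbb R^3$, $A_i^0:=\{y\in\mathbb R^3: y_1+y_2+y_3=1,\ y_i=0,\ y_l\ge0\ \forall l\}$ and $A^0:=A_1^0\cup A_2^0\cup A_3^0$. For $j\in\{1,2,3\}$ and $z\in A^0\setminus A_j^0$ let $f_j(z):=\sum_{i\neq j}\frac{(\mu_j-\lambda_j)z_i+\lambda_i z_j}{(\mu_j-\lambda_j)+\mu_j\theta_j z_j}\,e_i\in A_j^0$. Let $(\hat i,\hat j,\hat k)$ denote $(1,2,3)$ or one of its cyclic permutations; the point $(1-x)e_{\hat j}+xe_{\hat k}\in A^0_{\hat i}$, $x\in[0,1]$, is written $(x,\hat i)$, with $\mathrm{Side}((x,\hat i)):=\hat i$. Decision points are numbers $d_1,d_2,d_3\in(0,1)$, identified with the points $(d_{\hat i},\hat i)$. The switching rule is $\mathfrak R((x,\hat i))=\hat j$ if $x<d_{\hat i}$, $=\hat k$ if $x>d_{\hat i}$, and both values are allowed if $x=d_{\hat i}$. The map is $\varphi(z):=f_{\mathfrak R(z)}(z)$. A trajectory is a sequence $(z(t))_{t\ge0}$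 with $z(t+1)\in\varphi(z(t))$. It is eventually $m$-periodic if there is $N$ with $\mathrm{Side}(z(n+m))=\mathrm{Side}(z(n))$ for all $n\ge N$, and nonperiodic if it is eventually $m$-periodic for no $m\ge1$. *)

(* Defs.v *)
From Stdlib Require Import Reals Lra.
Open Scope R_scope.

Inductive side : Type := S1 | S2 | S3.

Definition side_eqb (i j : side) : bool :=
  match i, j with
  | S1, S1 | S2, S2 | S3, S3 => true
  | _, _ => false
  end.

(* cyclic successor: (i,j,k) = (1,2,3),(2,3,1),(3,1,2) *)
Definition succ (i : side) : side :=
  match i with S1 => S2 | S2 => S3 | S3 => S1 end.

Definition vec := side -> R.

Definition e (i : side) : vec := fun l => if side_eqb i l then 1 else 0.

Definition lamsum (lam : side -> R) : R := lam S1 + lam S2 + lam S3.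

Definition theta (lam mu : side -> R) (j : side) : R := / mu j * lamsum lam - 1.

Definition f (lam mu : side -> R) (j : side) (z : vec) : vec :=
  fun i => if side_eqb i j then 0
           else ((mu j - lam j) * z i + lam i * z j)
                / ((mu j - lam j) + mu j * theta lam mu j * z j).

(* A state (x, i) denotes the point (1-x) e_{succ i} + x e_{succ (succ i)}
   of A^0_i; Side((x,i)) = i. *)
Definition state := (side * R)%type.

Definition emb (s : state) : vec :=
  fun l => (1 - snd s) * e (succ (fst s)) l + snd s * e (succ (succ (fst s))) l.

Definition Side (s : state) : side := fst s.

Definition rule (d : side -> R) (s : state) (j : side) : Prop :=
  let i := fst s in let x := snd s in
  (x < d i /\ j = succ i) \/
  (x > d i /\ j = succ (succ i)) \/
  (x = d i /\ (j = succ i \/ j = succ (succ i))).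

Definition trajectory (lam mu d : side -> R) (z : nat -> state) : Prop :=
  (forall t, 0 <= snd (z t) <= 1) /\
  forall t, exists j, rule d (z t) j /\
    forall l, emb (z (S t)) l = f lam mu j (emb (z t)) l.

Definition eventually_periodic (z : nat -> state) (m : nat) : Prop :=
  exists N, forall n, (N <= n)%nat -> Side (z (n + m)%nat) = Side (z n).

Definition nonperiodic (z : nat -> state) : Prop :=
  forall m, (1 <= m)%nat -> ~ eventually_periodic z m.

Definition countable_set {T : Type} (S : T -> Prop) : Prop :=
  exists g : nat -> T, forall x, S x -> exists n, g n = x.

Definition uncountable_set {T : Type} (S : T -> Prop) : Prop := ~ countable_set S.

Definition dfun (d : R * R * R) : side -> R :=
  fun i => match i with S1 => fst (fst d) | S2 => snd (fst d) | S3 => snd d end.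

(* Main.v *)
Require Import Defs.
From Stdlib Require Import Reals.
From Stdlib Require Import Lra Lia Psatz Classical Ranalysis5 Cantor.
Open Scope R_scope.


Record P := mkP { al : R; be : R; al2 : R; be2 : R }.
Definition good (p : P) : Prop :=
  0 < al p /\ 0 < be p /\ 0 < al2 p /\ 0 < be2 p /\ 1 < be p * be2 p.
Definition Af (p : P) (y : R) : R := al p * y + be p.
Definition Bf (p : P) (y : R) : R := y / (al2 p + be2 p * y).
Definition T (p : P) (c u : R) : R := if Rlt_dec u c then Af p u else Bf p u.
Definition isB (p : P) (c u : R) : nat := if Rlt_dec u c then 0%nat else 1%nat.
Fixpoint orb (p : P) (c u : R) (n : nat) : R :=
  match n with O => u | S n => T p c (orb p c u n) end.
Fixpoint cnt (p : P) (c u : R) (n : nat) : nat :=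
  match n with O => O | S n => (cnt p c u n + isB p c (orb p c u n))%nat end.
Definition Dom (p : P) (c : R) : Prop := 0 < c /\ 1 < al2 p + be2 p * c.


Lemma Bf_eq p y : good p -> 0 <= y -> Bf p y * (al2 p + be2 p * y) = y.
Proof. intros [? [? [? [? ?]]]] Hy. unfold Bf. field. nra. Qed.

Lemma Bf_nonneg p y : good p -> 0 <= y -> 0 <= Bf p y.
Proof. intros Hg Hy. pose proof (Bf_eq p y Hg Hy) as E. destruct Hg as [? [? [? [? ?]]]].
  set (q := Bf p y) in *. set (D := al2 p + be2 p * y) in *.
  assert (0 < D) by (unfold D; nra).
  destruct (Rle_or_lt 0 q); auto. nra. Qed.

Lemma Bf_pos p y : good p -> 0 < y -> 0 < Bf p y.
Proof. intros Hg Hy. pose proof (Bf_eq p y Hg (Rlt_le _ _ Hy)) as E. destruct Hg as [? [? [? [? ?]]]].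
  set (q := Bf p y) in *. set (D := al2 p + be2 p * y) in *.
  assert (0 < D) by (unfold D; nra).
  destruct (Rle_or_lt q 0); auto. nra. Qed.

Lemma Bf_lt p y : good p -> 0 <= y -> Bf p y * be2 p < 1.
Proof. intros Hg Hy. pose proof (Bf_eq p y Hg Hy) as E. pose proof (Bf_nonneg p y Hg Hy).
  destruct Hg as [? [? [? [? ?]]]].
  set (q := Bf p y) in *. set (D := al2 p + be2 p * y) in *.
  assert (0 < D) by (unfold D; nra).
  assert (q * be2 p * D < D) by (unfold D in *; nra).
  destruct (Rle_or_lt 1 (q * be2 p)); auto. nra. Qed.

Lemma Bf_mono p y y' : good p -> 0 <= y -> y < y' -> Bf p y < Bf p y'.
Proof. intros Hg Hy Hyy. pose proof (Bf_eq p y Hg Hy). pose proof (Bf_eq p y' Hg ltac:(lra)).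
  destruct Hg as [? [? [? [? ?]]]].
  set (q := Bf p y) in *. set (q' := Bf p y') in *.
  assert (0 < al2 p + be2 p * y) by nra. assert (0 < al2 p + be2 p * y') by nra.
  assert ((q' - q) * ((al2 p + be2 p * y) * (al2 p + be2 p * y')) = al2 p * (y' - y)) by nra.
  assert (0 < (al2 p + be2 p * y) * (al2 p + be2 p * y')) by nra.
  nra. Qed.

Lemma Bf_monole p y y' : good p -> 0 <= y -> y <= y' -> Bf p y <= Bf p y'.
Proof. intros Hg Hy Hle. destruct Hle as [Hlt|Heq]. left; apply Bf_mono; auto. subst; lra. Qed.

Lemma Bf_lip p y y' : good p -> 0 <= y -> 0 <= y' -> Bf p y' - Bf p y <= Rabs (y' - y) / al2 p.
Proof. intros Hg Hy Hy'. pose proof (Bf_eq p y Hg Hy). pose proof (Bf_eq p y' Hg Hy').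
  destruct Hg as [? [? [? [? ?]]]].
  set (q := Bf p y) in *. set (q' := Bf p y') in *.
  assert (al2 p <= al2 p + be2 p * y) by nra. assert (al2 p <= al2 p + be2 p * y') by nra.
  assert (E: (q' - q) * ((al2 p + be2 p * y) * (al2 p + be2 p * y')) = al2 p * (y' - y)) by nra.
  assert (al2 p * al2 p <= (al2 p + be2 p * y) * (al2 p + be2 p * y')) by nra.
  assert (al2 p * (y'-y) <= al2 p * Rabs (y' - y)).
  { apply Rmult_le_compat_l. lra. apply Rle_abs. }
  assert (0 <= Rabs (y'-y)) by apply Rabs_pos.
  apply (Rmult_le_reg_r (al2 p)); auto. unfold Rdiv. rewrite Rmult_assoc, Rinv_l by lra.
  rewrite Rmult_1_r.
  destruct (Rle_or_lt (q' - q) 0). nra.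
  assert ((q'-q) * (al2 p * al2 p) <= al2 p * Rabs (y' - y)) by nra. nra. Qed.

Lemma Af_mono p y y' : good p -> y < y' -> Af p y < Af p y'.
Proof. intros [? [? [? [? ?]]]] Hyy. unfold Af. nra. Qed.

Lemma Af_gt p y : good p -> 0 <= y -> y * be2 p < 1 -> y < Af p y.
Proof. intros [? [? [? [? ?]]]] Hy1 Hy2. unfold Af.
  destruct (Rle_or_lt 1 (al p)). nra.
  assert ((1 - al p) * (y * be2 p) < be p * be2 p) by nra. nra. Qed.

Lemma BA_AB_gen (a b a2 b2 y : R) : 0 < a -> 0 < b -> 0 < a2 -> 0 < b2 -> 1 < b * b2 -> 0 <= y ->
  (a * y + b) / (a2 + b2 * (a * y + b)) < a * (y / (a2 + b2 * y)) + b.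
Proof. intros.
  assert (D1 : 0 < a2 + b2 * y) by nra.
  assert (0 <= a * y) by (apply Rmult_le_pos; lra).
  assert (D2 : 0 < a2 + b2 * (a * y + b)) by nra.
  assert (E : a * (y / (a2 + b2 * y)) + b - (a * y + b) / (a2 + b2 * (a * y + b))
           = (a*b2*(a - 1 + b*b2)*y*y + b*b2*(a + a*a2 + a2 - 1 + b*b2)*y + b*a2*(a2 - 1 + b*b2))
              / ((a2 + b2 * y) * (a2 + b2 * (a * y + b)))).
  { field. split; lra. }
  assert (0 < a*b2*(a - 1 + b*b2)*y*y + b*b2*(a + a*a2 + a2 - 1 + b*b2)*y + b*a2*(a2 - 1 + b*b2)).
  { assert (0 < a - 1 + b*b2) by lra. assert (0 < a + a*a2 + a2 - 1 + b*b2) by nra.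
    assert (0 < a2 - 1 + b*b2) by lra.
    assert (0 <= a*b2*(a - 1 + b*b2)*y*y).
    { repeat apply Rmult_le_pos; lra. }
    assert (0 <= b*b2*(a + a*a2 + a2 - 1 + b*b2)*y). { repeat apply Rmult_le_pos; lra. }
    assert (0 < b*a2*(a2 - 1 + b*b2)). { repeat apply Rmult_lt_0_compat; lra. }
    lra. }
  assert (0 < (a*b2*(a - 1 + b*b2)*y*y + b*b2*(a + a*a2 + a2 - 1 + b*b2)*y + b*a2*(a2 - 1 + b*b2))
              / ((a2 + b2 * y) * (a2 + b2 * (a * y + b)))).
  { apply Rdiv_lt_0_compat; auto. nra. }
  lra. Qed.

Lemma BA_AB p y : good p -> 0 <= y -> Bf p (Af p y) < Af p (Bf p y).
Proof. intros [? [? [? [? ?]]]] Hy. unfold Af, Bf. apply BA_AB_gen; auto. Qed.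


Lemma dom_b p c : good p -> Dom p c -> 0 < Bf p c < c.
Proof. intros Hg [Hc Hd]. split. apply Bf_pos; auto.
  pose proof (Bf_eq p c Hg ltac:(lra)) as E. destruct Hg as [? [? [? [? ?]]]].
  set (q := Bf p c) in *. clearbody q.
  destruct (Rle_or_lt c q); auto. nra. Qed.

Lemma dom_Ab p c : good p -> Dom p c -> Bf p c < Af p (Bf p c).
Proof. intros Hg Hd. pose proof (dom_b p c Hg Hd). apply Af_gt; auto. lra.
  apply Bf_lt; auto. destruct Hd; lra. Qed.

Lemma dom_BA p c : good p -> Dom p c -> Bf p (Af p c) < Af p (Bf p c).
Proof. intros Hg Hd. apply BA_AB; auto. destruct Hd; lra. Qed.

Lemma T_inv p c u : good p -> Dom p c -> Bf p c <= u < Af p c ->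
  Bf p c <= T p c u < Af p c.
Proof. intros Hg Hd Hu. pose proof (dom_b p c Hg Hd). pose proof (dom_Ab p c Hg Hd).
  pose proof (dom_BA p c Hg Hd).
  unfold T. destruct (Rlt_dec u c).
  - split.
    + assert (Af p (Bf p c) <= Af p u).
      { destruct (Rle_lt_or_eq_dec _ _ (proj1 Hu)) as [h|h]. left; apply Af_mono; auto. rewrite h; lra. }
      lra.
    + apply Af_mono; auto.
  - split.
    + apply Bf_monole; auto; lra.
    + assert (Bf p u < Bf p (Af p c)) by (apply Bf_mono; auto; lra).
      assert (Af p (Bf p c) < Af p c) by (apply Af_mono; auto; lra). lra.
Qed.

Lemma orb_inv p c u n : good p -> Dom p c -> Bf p c <= u < Af p c ->
  Bf p c <= orb p c u n < Af p c.
Proof. intros Hg Hd Hu. induction n; simpl; auto. apply T_inv; auto. Qed.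

Lemma T_inj p c u u' : good p -> Dom p c -> Bf p c <= u < Af p c -> Bf p c <= u' < Af p c ->
  T p c u = T p c u' -> u = u'.
Proof. intros Hg Hd Hu Hu' E. pose proof (dom_b p c Hg Hd). pose proof (dom_Ab p c Hg Hd).
  pose proof (dom_BA p c Hg Hd).
  assert (K1: forall v w, Bf p c <= v < Af p c -> Bf p c <= w < Af p c -> v < c -> ~ w < c ->
     Bf p w < Af p v).
  { intros v w Hv Hw h1 h2.
    assert (Bf p w < Bf p (Af p c)) by (apply Bf_mono; auto; lra).
    assert (Af p (Bf p c) <= Af p v).
    { destruct (Rle_lt_or_eq_dec _ _ (proj1 Hv)) as [h|h]. left; apply Af_mono; auto. rewrite h; lra. }
    lra. }
  unfold T in E. destruct (Rlt_dec u c); destruct (Rlt_dec u' c).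
  - destruct (Rtotal_order u u') as [h|[h|h]]; auto.
    + apply (Af_mono p) in h; auto; lra.
    + apply (Af_mono p) in h; auto; lra.
  - pose proof (K1 u u' Hu Hu' r n). lra.
  - pose proof (K1 u' u Hu' Hu r n). lra.
  - destruct (Rtotal_order u u') as [h|[h|h]]; auto.
    + apply (Bf_mono p) in h; auto; lra.
    + apply (Bf_mono p) in h; auto; lra.
Qed.

Lemma orb_add p c u m n : orb p c u (m + n) = orb p c (orb p c u m) n.
Proof. induction n. rewrite Nat.add_0_r; auto. rewrite Nat.add_succ_r. simpl. rewrite IHn; auto. Qed.

Lemma cnt_add p c u m n : cnt p c u (m + n) = (cnt p c u m + cnt p c (orb p c u m) n)%nat.
Proof. induction n. rewrite Nat.add_0_r; simpl; lia. rewrite Nat.add_succ_r. simpl. rewrite IHn, orb_add. lia. Qed.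

Lemma cnt_le p c u n : (cnt p c u n <= n)%nat.
Proof. induction n; simpl; auto. unfold isB. destruct (Rlt_dec _ _); lia. Qed.

Lemma cnt_mono p c u n k : (cnt p c u n <= cnt p c u (n + k))%nat.
Proof. rewrite cnt_add. lia. Qed.

Lemma mono_step p c u u' (k k' : nat) : good p -> Dom p c ->
  Bf p c <= u < Af p c -> Bf p c <= u' < Af p c ->
  u + INR k * (Af p c - Bf p c) <= u' + INR k' * (Af p c - Bf p c) ->
  T p c u + INR (k + isB p c u) * (Af p c - Bf p c) <= T p c u' + INR (k' + isB p c u') * (Af p c - Bf p c).
Proof. intros Hg Hd Hu Hu' H.
  pose proof (dom_b p c Hg Hd). pose proof (dom_Ab p c Hg Hd). pose proof (dom_BA p c Hg Hd).
  pose proof (T_inv p c u Hg Hd Hu) as Tu. pose proof (T_inv p c u' Hg Hd Hu') as Tu'.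
  remember (Af p c - Bf p c) as L eqn:HLdef.
  assert (HL : 0 < L) by lra.
  assert (Hkk : (k <= k')%nat).
  { assert ((INR k - INR k') * L < 1 * L) by lra.
    assert (INR k - INR k' < 1) by nra.
    assert (Hi : INR k < INR (k' + 1)) by (rewrite plus_INR; simpl; lra).
    apply INR_lt in Hi. lia. }
  rewrite !plus_INR.
  assert (Hd01 : forall v, 0 <= INR (isB p c v) <= 1).
  { intros v. unfold isB. destruct (Rlt_dec v c); simpl; lra. }
  pose proof (Hd01 u) as D1. pose proof (Hd01 u') as D2.
  destruct (Nat.eq_dec k k') as [Heq|Hne].
  { subst k'. assert (Huu : u <= u') by lra.
    revert Tu Tu' D1 D2. unfold T, isB.
    destruct (Rlt_dec u c); destruct (Rlt_dec u' c); simpl; intros.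
    + assert (Af p u <= Af p u').
      { destruct (Rle_lt_or_eq_dec _ _ Huu) as [h|h]. left; apply Af_mono; auto. rewrite h; lra. }
      lra.
    + assert (Af p u < Af p c) by (apply Af_mono; auto).
      assert (Bf p c <= Bf p u') by (apply Bf_monole; auto; lra).
      nra.
    + lra.
    + assert (Bf p u <= Bf p u') by (apply Bf_monole; auto; lra). lra. }
  destruct (Nat.eq_dec (S k) k') as [Heq2|Hne2].
  { subst k'. rewrite S_INR in *.
    revert Tu Tu' D1 D2. unfold T, isB.
    destruct (Rlt_dec u c); destruct (Rlt_dec u' c); simpl; intros.
    + assert (Af p u < Af p c) by (apply Af_mono; auto). nra.
    + assert (Af p u < Af p c) by (apply Af_mono; auto). nra.
    + assert (Bf p u < Bf p (Af p c)) by (apply Bf_mono; auto; lra).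
      assert (Af p (Bf p c) <= Af p u').
      { destruct (Rle_lt_or_eq_dec _ _ (proj1 Hu')) as [h|h]. left; apply Af_mono; auto. rewrite h; lra. }
      nra.
    + assert (Bf p u < Bf p (Af p c)) by (apply Bf_mono; auto; lra).
      assert (Bf p c <= Bf p u') by (apply Bf_monole; auto; lra).
      nra. }
  assert (INR k + 2 <= INR k').
  { replace (INR k + 2) with (INR (k + 2)) by (rewrite plus_INR; simpl; lra).
    apply le_INR. lia. }
  assert (INR k * L + 2 * L <= INR k' * L) by nra.
  nra.
Qed.


Lemma div_le (x y a b : R) : 0 < a -> 0 < b -> x * b <= y * a -> x / a <= y / b.
Proof. intros Ha Hb H.
  assert (E1 : x / a * a = x) by (field; lra). assert (E2 : y / b * b = y) by (field; lra).
  rewrite <- E1, <- E2 in H.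
  apply (Rmult_le_reg_r (a * b)). nra.
  replace (x / a * (a * b)) with (x / a * a * b) by ring.
  replace (y / b * (a * b)) with (y / b * b * a) by ring. lra. Qed.

Lemma orb_mono p c u u' (k k' : nat) n : good p -> Dom p c ->
  Bf p c <= u < Af p c -> Bf p c <= u' < Af p c ->
  u + INR k * (Af p c - Bf p c) <= u' + INR k' * (Af p c - Bf p c) ->
  orb p c u n + INR (k + cnt p c u n) * (Af p c - Bf p c) <=
  orb p c u' n + INR (k' + cnt p c u' n) * (Af p c - Bf p c).
Proof. intros Hg Hd Hu Hu' H. induction n.
  - simpl. rewrite !Nat.add_0_r. auto.
  - simpl. replace (k + (cnt p c u n + isB p c (orb p c u n)))%nat
      with ((k + cnt p c u n) + isB p c (orb p c u n))%nat by lia.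
    replace (k' + (cnt p c u' n + isB p c (orb p c u' n)))%nat
      with ((k' + cnt p c u' n) + isB p c (orb p c u' n))%nat by lia.
    apply mono_step; auto; apply orb_inv; auto.
Qed.

Lemma fact1 p c u u' n : good p -> Dom p c ->
  Bf p c <= u < Af p c -> Bf p c <= u' < Af p c ->
  (cnt p c u n <= cnt p c u' n + 1)%nat.
Proof. intros Hg Hd Hu Hu'.
  pose proof (dom_b p c Hg Hd). pose proof (dom_Ab p c Hg Hd).
  assert (Af p (Bf p c) < Af p c) by (apply Af_mono; auto; lra).
  assert (Hz : u + INR 0 * (Af p c - Bf p c) <= u' + INR 1 * (Af p c - Bf p c)).
  { simpl. lra. }
  pose proof (orb_mono p c u u' 0 1 n Hg Hd Hu Hu' Hz) as M.
  pose proof (orb_inv p c u n Hg Hd Hu). pose proof (orb_inv p c u' n Hg Hd Hu').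
  replace (0 + cnt p c u n)%nat with (cnt p c u n) in M by lia.
  replace (1 + cnt p c u' n)%nat with (S (cnt p c u' n)) in M by lia. rewrite S_INR in M.
  remember (Af p c - Bf p c) as L. assert (0 < L) by lra.
  assert (INR (cnt p c u n) * L < (INR (cnt p c u' n) + 2) * L) by nra.
  assert (Hi : INR (cnt p c u n) < INR (cnt p c u' n + 2)).
  { rewrite plus_INR. simpl. nra. }
  apply INR_lt in Hi. lia.
Qed.

Definition N p c n := cnt p c (Bf p c) n.

Lemma b_in p c : good p -> Dom p c -> Bf p c <= Bf p c < Af p c.
Proof. intros Hg Hd. pose proof (dom_b p c Hg Hd). pose proof (dom_Ab p c Hg Hd).
  assert (Af p (Bf p c) < Af p c) by (apply Af_mono; auto; lra). lra. Qed.

Lemma near_add p c m n : good p -> Dom p c ->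
  (N p c (m + n) <= N p c m + N p c n + 1)%nat /\ (N p c m + N p c n <= N p c (m + n) + 1)%nat.
Proof. intros Hg Hd. unfold N. rewrite cnt_add.
  pose proof (b_in p c Hg Hd) as Hb.
  pose proof (orb_inv p c (Bf p c) m Hg Hd Hb) as Ho.
  pose proof (fact1 p c _ _ n Hg Hd Ho Hb). pose proof (fact1 p c _ _ n Hg Hd Hb Ho). lia. Qed.

Lemma mult_bounds p c m k : good p -> Dom p c ->
  (N p c (k * m) <= k * N p c m + k)%nat /\ (k * N p c m <= N p c (k * m) + k)%nat.
Proof. intros Hg Hd. induction k.
  - unfold N; simpl; lia.
  - rewrite !Nat.mul_succ_l.
    destruct (near_add p c (k * m) m Hg Hd). lia. Qed.

Lemma key_ineq p c n m : good p -> Dom p c ->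
  (m * N p c n <= n * N p c m + n + m)%nat.
Proof. intros Hg Hd. destruct (mult_bounds p c n m Hg Hd) as [_ A1].
  destruct (mult_bounds p c m n Hg Hd) as [A2 _].
  rewrite Nat.mul_comm in A2. lia. Qed.

Definition E p c (r : R) : Prop := exists n : nat, r = (INR (N p c (S n)) - 1) / INR (S n).

Lemma E_bound p c : bound (E p c).
Proof. exists 1. intros r [n ->]. pose proof (cnt_le p c (Bf p c) (S n)).
  apply le_INR in H. unfold N. pose proof (pos_INR n). rewrite S_INR in *.
  apply Rle_trans with ((INR n + 1) / (INR n + 1)).
  apply div_le; try lra.
  assert (0 <= (INR n + 1 - INR (cnt p c (Bf p c) (S n)) + 1) * (INR n + 1)).
  { apply Rmult_le_pos; lra. }
  lra. right; field; lra. Qed.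

Lemma E_ne p c : exists r, E p c r.
Proof. exists ((INR (N p c 1) - 1) / INR 1). exists O. auto. Qed.

Definition rho p c : R := proj1_sig (completeness (E p c) (E_bound p c) (E_ne p c)).

Lemma rho_bounds p c n : good p -> Dom p c ->
  (INR (N p c (S n)) - 1) / INR (S n) <= rho p c <= (INR (N p c (S n)) + 1) / INR (S n).
Proof. intros Hg Hd. unfold rho. destruct (completeness _ _ _) as [r [Hub Hlub]]. cbn [proj1_sig].
  split.
  - apply Hub. exists n. auto.
  - apply Hlub. intros x [m ->].
    pose proof (key_ineq p c (S m) (S n) Hg Hd) as K.
    apply le_INR in K. rewrite !plus_INR, !mult_INR in K.
    apply div_le. apply lt_0_INR; lia. apply lt_0_INR; lia. nra.
Qed.


Lemma orb_inj p c u u' n : good p -> Dom p c ->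
  Bf p c <= u < Af p c -> Bf p c <= u' < Af p c -> orb p c u n = orb p c u' n -> u = u'.
Proof. intros Hg Hd Hu Hu'. induction n; simpl; auto.
  intros E. apply IHn. apply (T_inj p c); auto; apply orb_inv; auto. Qed.

Lemma avoid p c n : good p -> Dom p c -> forall p0 q0, Bf p c <= p0 -> p0 < q0 -> q0 <= Af p c ->
  exists u, p0 < u < q0 /\ forall k, (k < n)%nat -> orb p c u k <> c.
Proof. intros Hg Hd. induction n; intros p0 q0 H1 H2 H3.
  - exists ((p0 + q0) / 2). split. lra. intros k Hk. lia.
  - destruct (IHn p0 ((p0+q0)/2) H1 ltac:(lra) ltac:(lra)) as [u1 [Hu1 A1]].
    destruct (IHn ((p0+q0)/2) q0 ltac:(lra) ltac:(lra) H3) as [u2 [Hu2 A2]].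
    destruct (Req_dec (orb p c u1 n) c) as [E1|E1].
    + destruct (Req_dec (orb p c u2 n) c) as [E2|E2].
      * exfalso. assert (u1 = u2). { apply (orb_inj p c u1 u2 n); auto; try lra. }
        lra.
      * exists u2. split. lra. intros k Hk. destruct (Nat.eq_dec k n). subst; auto. apply A2; lia.
    + exists u1. split. lra. intros k Hk. destruct (Nat.eq_dec k n). subst; auto. apply A1; lia.
Qed.

Lemma delta_lem (f : nat -> R) n : (forall k, (k < n)%nat -> 0 < f k) ->
  exists d, 0 < d /\ forall k, (k < n)%nat -> d <= f k.
Proof. induction n; intros H.
  - exists 1. split. lra. intros; lia.
  - destruct IHn as [d [Hd Hk]]. intros; apply H; lia.
    exists (Rmin d (f n)). split. apply Rmin_glb_lt; auto.
    intros k Hk'. destruct (Nat.eq_dec k n). subst. apply Rmin_r.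
    apply Rle_trans with d. apply Rmin_l. apply Hk; lia.
Qed.

Lemma agree p c c' u n : (forall k, (k < n)%nat -> (orb p c u k < c <-> orb p c u k < c')) ->
  orb p c' u n = orb p c u n /\ cnt p c' u n = cnt p c u n.
Proof. induction n; intros H. simpl; auto.
  destruct IHn as [E1 E2]. intros k Hk; apply H; lia.
  specialize (H n ltac:(lia)). simpl. rewrite E1, E2. unfold T, isB.
  destruct (Rlt_dec (orb p c u n) c); destruct (Rlt_dec (orb p c u n) c'); try tauto.
Qed.

Lemma rho_cont p c : good p -> Dom p c -> forall eps, 0 < eps ->
  exists eta, 0 < eta /\ forall c', Rabs (c' - c) < eta -> Rabs (rho p c' - rho p c) < eps.
Proof. intros Hg Hd eps Heps.
  destruct (archimed_cor1 (eps / 4) ltac:(lra)) as [M [HM HM0]].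
  destruct M as [|n]. lia.
  pose proof (dom_b p c Hg Hd). pose proof (dom_Ab p c Hg Hd).
  assert (Af p (Bf p c) < Af p c) by (apply Af_mono; auto; lra).
  destruct (avoid p c (S n) Hg Hd (Bf p c) (Af p c) ltac:(lra) ltac:(lra) ltac:(lra)) as [u [Hu Av]].
  destruct (delta_lem (fun k => Rabs (orb p c u k - c)) (S n)) as [dl [Hdl Hdk]].
  { intros k Hk. apply Rabs_pos_lt. specialize (Av k Hk). lra. }
  pose proof Hg as [Ha [Hb [Ha2 [Hb2 Hbb]]]]. destruct Hd as [Hc Hd2].
  set (eta := Rmin dl (Rmin (al2 p * (u - Bf p c)) (Rmin ((Af p c - u) / al p)
              (Rmin c ((al2 p + be2 p * c - 1) / be2 p))))).
  assert (He1 : eta <= dl) by apply Rmin_l.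
  assert (He2 : eta <= al2 p * (u - Bf p c)) by (eapply Rle_trans; [apply Rmin_r|apply Rmin_l]).
  assert (He3 : eta <= (Af p c - u) / al p).
  { eapply Rle_trans; [apply Rmin_r|]. eapply Rle_trans; [apply Rmin_r|apply Rmin_l]. }
  assert (He4 : eta <= c).
  { eapply Rle_trans; [apply Rmin_r|]. eapply Rle_trans; [apply Rmin_r|].
    eapply Rle_trans; [apply Rmin_r|apply Rmin_l]. }
  assert (He5 : eta <= (al2 p + be2 p * c - 1) / be2 p).
  { eapply Rle_trans; [apply Rmin_r|]. eapply Rle_trans; [apply Rmin_r|].
    eapply Rle_trans; [apply Rmin_r|apply Rmin_r]. }
  assert (Hpos : 0 < eta).
  { unfold eta. repeat apply Rmin_glb_lt; auto.
    apply Rmult_lt_0_compat; lra. apply Rdiv_lt_0_compat; lra. apply Rdiv_lt_0_compat; lra. }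
  exists eta. split; auto. intros c' Hc'.
  assert (Hcc : - eta < c' - c < eta) by (apply Rabs_def2 in Hc'; lra).
  assert (Hd' : Dom p c').
  { split. lra.
    assert (be2 p * eta <= al2 p + be2 p * c - 1).
    { apply Rmult_le_compat_l with (r := be2 p) in He5; [|lra].
      replace (be2 p * ((al2 p + be2 p * c - 1) / be2 p)) with (al2 p + be2 p * c - 1) in He5
        by (field; lra). lra. }
    nra. }
  assert (Hbu : Bf p c' < u).
  { pose proof (Bf_lip p c c' Hg ltac:(lra) ltac:(lra)).
    assert (Rabs (c' - c) / al2 p < u - Bf p c).
    { apply Rmult_lt_reg_r with (al2 p); auto. unfold Rdiv. rewrite Rmult_assoc, Rinv_l by lra.
      nra. }
    lra. }
  assert (Hau : u < Af p c').
  { unfold Af. assert (al p * eta <= Af p c - u).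
    { apply Rmult_le_compat_l with (r := al p) in He3; [|lra].
      replace (al p * ((Af p c - u) / al p)) with (Af p c - u) in He3 by (field; lra). lra. }
    unfold Af in *. nra. }
  assert (Hu' : Bf p c' <= u < Af p c') by lra.
  assert (Hu0 : Bf p c <= u < Af p c) by lra.
  destruct (agree p c c' u (S n)) as [_ Ecnt].
  { intros k Hk. specialize (Hdk k Hk). simpl in Hdk.
    destruct (Rle_or_lt (orb p c u k) c).
    - rewrite Rabs_left1 in Hdk by lra. split; intros; lra.
    - rewrite Rabs_right in Hdk by lra. split; intros; lra. }
  pose proof (fact1 p c u (Bf p c) (S n) Hg (conj Hc Hd2) Hu0 (b_in p c Hg (conj Hc Hd2))) as F1.
  pose proof (fact1 p c (Bf p c) u (S n) Hg (conj Hc Hd2) (b_in p c Hg (conj Hc Hd2)) Hu0) as F2.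
  pose proof (fact1 p c' u (Bf p c') (S n) Hg Hd' Hu' (b_in p c' Hg Hd')) as F3.
  pose proof (fact1 p c' (Bf p c') u (S n) Hg Hd' (b_in p c' Hg Hd') Hu') as F4.
  rewrite Ecnt in F3, F4.
  assert (D1 : (N p c (S n) <= N p c' (S n) + 2)%nat) by (unfold N; lia).
  assert (D2 : (N p c' (S n) <= N p c (S n) + 2)%nat) by (unfold N; lia).
  apply le_INR in D1. apply le_INR in D2. rewrite plus_INR in D1, D2.
  assert (I2 : INR 2 = 2) by (simpl; lra). rewrite I2 in D1, D2.
  assert (Ht : 0 < / INR (S n)) by (apply Rinv_0_lt_compat; apply lt_0_INR; lia).
  pose proof (rho_bounds p c n Hg (conj Hc Hd2)) as R1.
  pose proof (rho_bounds p c' n Hg Hd') as R2.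
  unfold Rdiv in R1, R2.
  set (t := / INR (S n)) in *. clearbody t.
  set (X := INR (N p c (S n))) in *. set (X' := INR (N p c' (S n))) in *.
  clearbody X X'.
  assert ((X' - X - 2) * t <= 0) by nra.
  assert ((X - X' - 2) * t <= 0) by nra.
  apply Rabs_def1; lra.
Qed.


Lemma T_A p c u : u < c -> T p c u = Af p u.
Proof. intros H. unfold T. destruct (Rlt_dec u c); tauto. Qed.
Lemma T_B p c u : c <= u -> T p c u = Bf p u.
Proof. intros H. unfold T. destruct (Rlt_dec u c); auto; lra. Qed.
Lemma isB_A p c u : u < c -> isB p c u = 0%nat.
Proof. intros H. unfold isB. destruct (Rlt_dec u c); auto; lra. Qed.
Lemma isB_B p c u : c <= u -> isB p c u = 1%nat.
Proof. intros H. unfold isB. destruct (Rlt_dec u c); auto; lra. Qed.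

Definition chi (p : P) : R :=
  (1 + al p + al p * al p + al p * al p * al p) / be2 p + be p * (1 + al p + al p * al p) + 1.
Definition clo (p : P) : R := Bf p (Bf p (Bf p (be p))).

Definition Pp p y := 0 < y /\ 1 < al2 p + be2 p * y.

Lemma Pp_B p y : good p -> Pp p y -> Pp p (Bf p y) /\ Bf p y < y.
Proof. intros Hg [Hy1 Hy2]. pose proof (Bf_eq p y Hg ltac:(lra)) as E.
  pose proof (Bf_pos p y Hg Hy1) as Hq.
  destruct Hg as [? [? [? [? ?]]]].
  remember (Bf p y) as q. remember (al2 p + be2 p * y) as D.
  split. split; auto.
  - assert ((al2 p + be2 p * q - 1) * D = al2 p * (D - 1)) by (subst D; nra).
    assert (0 < al2 p * (D - 1)) by nra.
    destruct (Rle_or_lt (al2 p + be2 p * q) 1); auto. nra.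
  - nra.
Qed.

Lemma rho_chi p : good p -> Dom p (chi p) /\ rho p (chi p) <= 1/4.
Proof. intros Hg. pose proof Hg as [Ha [Hb [Ha2 [Hb2 Hbb]]]].
  assert (K0 : 0 <= al p * al p) by nra.
  assert (K1 : 0 <= al p * al p * al p) by (apply Rmult_le_pos; lra).
  assert (Kb : 1 / be2 p <= (1 + al p + al p * al p + al p * al p * al p) / be2 p).
  { apply div_le; nra. }
  assert (Kp : 0 < 1 / be2 p) by (apply Rdiv_lt_0_compat; lra).
  assert (K2 : 0 <= be p * (1 + al p + al p * al p)) by (apply Rmult_le_pos; nra).
  assert (HD : Dom p (chi p)).
  { unfold chi. split. lra.
    assert (be2 p * (1 / be2 p) = 1) by (field; lra). nra. }
  split; auto.
  set (c := chi p) in *.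
  set (b := Bf p c).
  pose proof (Bf_lt p c Hg ltac:(destruct HD; lra)) as Hbl. fold b in Hbl.
  pose proof (Bf_pos p c Hg ltac:(destruct HD; lra)) as Hbp. fold b in Hbp.
  assert (Hb1 : b <= 1 / be2 p).
  { assert (be2 p * (1 / be2 p) = 1) by (field; lra). nra. }
  assert (Hb1' : al p * b <= al p * (1 / be2 p)) by nra.
  assert (Hb2' : al p * al p * b <= al p * al p * (1 / be2 p)) by nra.
  assert (Hb3' : al p * al p * al p * b <= al p * al p * al p * (1 / be2 p)) by nra.
  assert (Ehelp : (1 + al p + al p * al p + al p * al p * al p) / be2 p
          = 1 / be2 p + al p * (1 / be2 p) + al p * al p * (1 / be2 p) + al p * al p * al p * (1 / be2 p))
    by (field; lra).
  assert (Kc : c = 1 / be2 p + al p * (1 / be2 p) + al p * al p * (1 / be2 p) + al p * al p * al p * (1 / be2 p)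
     + be p * (1 + al p + al p * al p) + 1) by (unfold c, chi; rewrite Ehelp; ring).
  clearbody c. clear Ehelp.
  assert (O0 : orb p c b 0 < c) by (simpl; nra).
  assert (O1 : orb p c b 1 = Af p b) by (simpl; rewrite T_A; auto).
  assert (O1' : orb p c b 1 < c) by (rewrite O1; unfold Af; nra).
  assert (O2 : orb p c b 2 = Af p (Af p b)) by (simpl; simpl in O1; rewrite O1, T_A; auto; rewrite <- O1; auto).
  assert (O2' : orb p c b 2 < c) by (rewrite O2; unfold Af; nra).
  assert (O3 : orb p c b 3 = Af p (Af p (Af p b))).
  { change (orb p c b 3) with (T p c (orb p c b 2)). rewrite O2, T_A; auto. rewrite <- O2; auto. }
  assert (O3' : orb p c b 3 < c) by (rewrite O3; unfold Af; nra).
  assert (HN : N p c 4 = 0%nat).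
  { unfold N. fold b. simpl. rewrite !isB_A; auto. }
  pose proof (rho_bounds p c 3 Hg HD) as [_ R]. rewrite HN in R.
  replace (INR 0 + 1) with 1 in R by (simpl; lra).
  replace (INR 4) with 4 in R by (simpl; lra). lra.
Qed.

Lemma rho_clo p : good p -> Dom p (clo p) /\ 3/5 <= rho p (clo p) /\ clo p * be2 p < 1.
Proof. intros Hg. pose proof Hg as [Ha [Hb [Ha2 [Hb2 Hbb]]]].
  assert (P0 : Pp p (be p)) by (split; nra).
  destruct (Pp_B p _ Hg P0) as [P1 L1].
  destruct (Pp_B p _ Hg P1) as [P2 L2].
  destruct (Pp_B p _ Hg P2) as [P3 L3].
  assert (HD : Dom p (clo p)) by exact P3.
  split; auto.
  split.
  2:{ apply Bf_lt; auto. destruct P2; lra. }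
  set (c := clo p) in *. unfold clo in c.
  set (b1 := Bf p (be p)) in *. set (b2 := Bf p b1) in *.
  set (b := Bf p c).
  pose proof (dom_b p c Hg HD) as Hbc. fold b in Hbc.
  set (v := Af p b).
  assert (Hv : be p <= v) by (unfold v, Af; nra).
  assert (O0 : orb p c b 0 < c) by (simpl; lra).
  assert (O1 : orb p c b 1 = v) by (simpl; rewrite T_A; auto).
  assert (O1' : c <= orb p c b 1) by (rewrite O1; unfold c; lra).
  assert (O2 : orb p c b 2 = Bf p v).
  { change (orb p c b 2) with (T p c (orb p c b 1)). rewrite T_B, O1; auto. }
  assert (Q2 : b1 <= Bf p v) by (apply Bf_monole; auto; lra).
  assert (O2' : c <= orb p c b 2) by (rewrite O2; unfold c; lra).
  assert (O3 : orb p c b 3 = Bf p (Bf p v)).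
  { change (orb p c b 3) with (T p c (orb p c b 2)). rewrite T_B, O2; auto. }
  assert (Q3 : b2 <= Bf p (Bf p v)) by (apply Bf_monole; auto; destruct P1; lra).
  assert (O3' : c <= orb p c b 3) by (rewrite O3; unfold c; lra).
  assert (O4 : orb p c b 4 = Bf p (Bf p (Bf p v))).
  { change (orb p c b 4) with (T p c (orb p c b 3)). rewrite T_B, O3; auto. }
  assert (Q4 : c <= Bf p (Bf p (Bf p v))) by (unfold c; apply Bf_monole; auto; destruct P2; lra).
  assert (O4' : c <= orb p c b 4) by (rewrite O4; lra).
  assert (HN : N p c 5 = 4%nat).
  { unfold N. fold b. change (cnt p c b 5) with
      (0 + isB p c (orb p c b 0) + isB p c (orb p c b 1) + isB p c (orb p c b 2)
       + isB p c (orb p c b 3) + isB p c (orb p c b 4))%nat.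
    rewrite isB_A by auto. rewrite !isB_B by auto. reflexivity. }
  pose proof (rho_bounds p c 4 Hg HD) as [R _]. rewrite HN in R.
  replace (INR 4 - 1) with 3 in R by (simpl; lra).
  replace (INR 5) with 5 in R by (simpl; lra). lra.
Qed.

Lemma Dom_up p c c' : good p -> Dom p c -> c <= c' -> Dom p c'.
Proof. intros [? [? [? [? ?]]]] [Hc1 Hc2] Hcc. split. lra. nra. Qed.

Lemma clo_lt_chi p : good p -> clo p < chi p.
Proof. intros Hg. destruct (rho_clo p Hg) as [[H0 _] [_ H]].
  pose proof Hg as [Ha [Hb [Ha2 [Hb2 Hbb]]]]. unfold chi.
  assert (clo p < 1 / be2 p).
  { apply Rmult_lt_reg_r with (be2 p); auto. replace (1 / be2 p * be2 p) with 1 by (field; lra). lra. }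
  assert (1 / be2 p <= (1 + al p + al p * al p + al p * al p * al p) / be2 p).
  { apply div_le; try lra. assert (0 <= al p * al p) by nra.
    assert (0 <= al p * al p * al p) by (apply Rmult_le_pos; lra). nra. }
  assert (0 <= be p * (1 + al p + al p * al p)) by (apply Rmult_le_pos; nra). lra.
Qed.

Lemma ivt_rho p r : good p -> 1/4 < r < 3/5 -> exists c, clo p <= c <= chi p /\ rho p c = r.
Proof. intros Hg Hr.
  destruct (rho_clo p Hg) as [Dlo [Rlo _]]. destruct (rho_chi p Hg) as [Dhi Rhi].
  destruct (IVT_interv (fun c => r - rho p c) (clo p) (chi p)) as [z [Hz Ez]].
  - intros a Ha. assert (Da : Dom p a) by (apply (Dom_up p (clo p)); tauto).
    intros eps Heps. destruct (rho_cont p a Hg Da eps Heps) as [eta [Heta Hc]].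
    exists eta. split; auto. intros x [_ Hx]. simpl in *. unfold R_dist in *.
    replace (r - rho p x - (r - rho p a)) with (- (rho p x - rho p a)) by ring.
    rewrite Rabs_Ropp. apply Hc; auto.
  - apply clo_lt_chi; auto.
  - simpl. lra.
  - simpl. lra.
  - exists z. split; auto. lra.
Qed.


Lemma rho_abs p c n : good p -> Dom p c -> (1 <= n)%nat ->
  Rabs (INR (N p c n) - INR n * rho p c) <= 1.
Proof. intros Hg Hd Hn. destruct n as [|n]. lia.
  pose proof (rho_bounds p c n Hg Hd) as [R1 R2].
  assert (Hp : 0 < INR (S n)) by (apply lt_0_INR; lia).
  assert (E1 : (INR (N p c (S n)) - 1) / INR (S n) * INR (S n) = INR (N p c (S n)) - 1) by (field; lra).
  assert (E2 : (INR (N p c (S n)) + 1) / INR (S n) * INR (S n) = INR (N p c (S n)) + 1) by (field; lra).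
  apply Rabs_le. split.
  - assert ((INR (N p c (S n)) + 1) / INR (S n) * INR (S n) >= rho p c * INR (S n)) by nra. nra.
  - assert ((INR (N p c (S n)) - 1) / INR (S n) * INR (S n) <= rho p c * INR (S n)) by nra. nra.
Qed.

Lemma per_rat p c N0 m : good p -> Dom p c -> (1 <= m)%nat ->
  (forall k, (N0 <= k)%nat -> isB p c (orb p c (Bf p c) (k + m)) = isB p c (orb p c (Bf p c) k)) ->
  exists q m', rho p c = INR q / INR (S m').
Proof. intros Hg Hd Hm Hper.
  set (Q := (N p c (N0 + m) - N p c N0)%nat).
  assert (HQ : (N p c N0 <= N p c (N0 + m))%nat) by (unfold N; apply cnt_mono).
  assert (Step : forall i, N p c (N0 + i + m) = (N p c (N0 + i) + Q)%nat).
  { induction i.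
    - rewrite Nat.add_0_r. unfold Q. lia.
    - replace (N0 + S i + m)%nat with (S (N0 + i + m)) by lia.
      replace (N0 + S i)%nat with (S (N0 + i)) by lia.
      unfold N in *. simpl. rewrite IHi. rewrite Hper by lia. apply Nat.add_shuffle0. }
  set (N1 := S N0).
  assert (Mult : forall j, N p c (N1 + j * m) = (N p c N1 + j * Q)%nat).
  { induction j.
    - rewrite Nat.mul_0_l, !Nat.add_0_r. reflexivity.
    - replace (N1 + S j * m)%nat with (N0 + (1 + j * m) + m)%nat by (unfold N1; simpl; lia).
      rewrite Step. replace (N0 + (1 + j * m))%nat with (N1 + j * m)%nat by (unfold N1; lia).
      rewrite IHj. rewrite Nat.mul_succ_l, Nat.add_assoc. reflexivity. }
  set (e := INR Q - INR m * rho p c).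
  assert (Hb : forall j, INR j * Rabs e <= 2).
  { intros j. pose proof (rho_abs p c (N1 + j * m) Hg Hd ltac:(unfold N1; lia)) as A1.
    pose proof (rho_abs p c N1 Hg Hd ltac:(unfold N1; lia)) as A2.
    rewrite Mult in A1. rewrite plus_INR, mult_INR in A1. rewrite plus_INR, mult_INR in A1.
    assert (INR j * e = (INR (N p c N1) + INR j * INR Q - (INR N1 + INR j * INR m) * rho p c)
                        - (INR (N p c N1) - INR N1 * rho p c)) by (unfold e; ring).
    assert (Rabs (INR j * e) <= 2).
    { rewrite H. eapply Rle_trans. apply Rabs_triang. rewrite Rabs_Ropp. lra. }
    rewrite Rabs_mult, Rabs_right in H0 by (apply Rle_ge, pos_INR). auto. }
  assert (He : e = 0).
  { destruct (Req_dec e 0) as [|Hne]; auto. exfalso.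
    destruct (INR_archimed (Rabs e) 2) as [j Hj]. apply Rabs_pos_lt; auto.
    specialize (Hb j). lra. }
  destruct m as [|m']. lia.
  exists Q, m'. unfold e in He.
  assert (0 < INR (S m')) by (apply lt_0_INR; lia).
  apply (Rmult_eq_reg_r (INR (S m'))). 2: lra.
  field_simplify; lra.
Qed.

Fixpoint Iseq (h : nat -> R) (a b : R) (n : nat) : R * R :=
  match n with
  | O => (a + (b - a) / 3, b - (b - a) / 3)
  | S n => let (x, y) := Iseq h a b n in
           if Rlt_dec (h n) ((x + y) / 2) then (x + 2 * (y - x) / 3, y) else (x, x + (y - x) / 3)
  end.

Lemma Iseq_props h a b n : a < b ->
  fst (Iseq h a b n) < snd (Iseq h a b n) /\
  fst (Iseq h a b n) <= fst (Iseq h a b (S n)) /\ snd (Iseq h a b (S n)) <= snd (Iseq h a b n) /\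
  (h n < fst (Iseq h a b (S n)) \/ snd (Iseq h a b (S n)) < h n).
Proof. intros Hab. induction n.
  - simpl. destruct (Rlt_dec (h 0%nat) _); simpl; lra.
  - destruct IHn as [H1 _].
    assert (Hs : fst (Iseq h a b (S n)) < snd (Iseq h a b (S n))).
    { simpl. destruct (Iseq h a b n) as [x y]. simpl in H1.
      destruct (Rlt_dec (h n) _); simpl; lra. }
    split; auto.
    change (Iseq h a b (S (S n))) with
      (let (x, y) := Iseq h a b (S n) in
       if Rlt_dec (h (S n)) ((x + y) / 2) then (x + 2 * (y - x) / 3, y) else (x, x + (y - x) / 3)).
    destruct (Iseq h a b (S n)) as [x y]. simpl in Hs.
    destruct (Rlt_dec (h (S n)) _); simpl; lra.
Qed.

Lemma Iseq_nest h a b m n : a < b -> fst (Iseq h a b m) <= snd (Iseq h a b n).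
Proof. intros Hab.
  assert (Mf : forall i k, fst (Iseq h a b i) <= fst (Iseq h a b (i + k))).
  { intros i k. induction k. rewrite Nat.add_0_r; lra.
    rewrite Nat.add_succ_r. pose proof (Iseq_props h a b (i + k) Hab). lra. }
  assert (Ms : forall i k, snd (Iseq h a b (i + k)) <= snd (Iseq h a b i)).
  { intros i k. induction k. rewrite Nat.add_0_r; lra.
    rewrite Nat.add_succ_r. pose proof (Iseq_props h a b (i + k) Hab). lra. }
  destruct (Nat.le_ge_cases m n) as [H|H].
  - replace n with (m + (n - m))%nat by lia. pose proof (Mf m (n - m)%nat).
    pose proof (Iseq_props h a b (m + (n - m)) Hab). lra.
  - replace m with (n + (m - n))%nat by lia. pose proof (Ms n (m - n)%nat).
    pose proof (Iseq_props h a b (n + (m - n)) Hab). lra.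
Qed.

Lemma uncount (h : nat -> R) (a b : R) : a < b -> exists r, a < r < b /\ forall n, h n <> r.
Proof. intros Hab.
  set (Ef := fun r => exists n, r = fst (Iseq h a b n)).
  assert (Hbd : bound Ef).
  { exists (snd (Iseq h a b 0)). intros r [n ->]. apply Iseq_nest; auto. }
  assert (Hne : exists r, Ef r) by (exists (fst (Iseq h a b 0)); exists 0%nat; auto).
  destruct (completeness Ef Hbd Hne) as [r [Hub Hlub]].
  assert (Hin : forall n, fst (Iseq h a b n) <= r <= snd (Iseq h a b n)).
  { intros n. split. apply Hub. exists n; auto.
    apply Hlub. intros x [m ->]. apply Iseq_nest; auto. }
  exists r. split.
  - pose proof (Hin 0%nat). simpl in H. lra.
  - intros n E. pose proof (Hin (S n)). pose proof (Iseq_props h a b n Hab) as [_ [_ [_ H4]]].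
    rewrite E in H4. lra.
Qed.

Ltac nzs := repeat split; apply Rgt_not_eq; nra.

Lemma id1 (lam mu : side -> R) y : (forall i, 0 < lam i) -> (forall i, lam i < mu i) -> 0 < y ->
  forall l, emb (S2, lam S1 / ((mu S2 - lam S2) * y + lamsum lam - lam S2)) l
            = Defs.f lam mu S2 (emb (S1, y / (1 + y))) l.
Proof. intros Hl Hm Hy l.
  pose proof (Hl S1). pose proof (Hl S2). pose proof (Hl S3).
  pose proof (Hm S1). pose proof (Hm S2). pose proof (Hm S3).
  assert (0 < (mu S2 - lam S2) * y) by (apply Rmult_lt_0_compat; lra).
  destruct l; unfold emb, Defs.f, e, theta, lamsum; simpl; field; nzs.
Qed.

Lemma id2 (lam mu : side -> R) y : (forall i, 0 < lam i) -> (forall i, lam i < mu i) -> 0 < y ->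
  let Ay := (mu S1 - lam S1) * (mu S2 - lam S2) / (lam S1 * lam S2) * y + lam S3 * mu S1 / (lam S1 * lam S2) in
  forall l, emb (S1, Ay / (1 + Ay)) l
            = Defs.f lam mu S1 (emb (S2, lam S1 / ((mu S2 - lam S2) * y + lamsum lam - lam S2))) l.
Proof. intros Hl Hm Hy Ay l. unfold Ay.
  pose proof (Hl S1). pose proof (Hl S2). pose proof (Hl S3).
  pose proof (Hm S1). pose proof (Hm S2). pose proof (Hm S3).
  assert (0 < (mu S2 - lam S2) * y) by (apply Rmult_lt_0_compat; lra).
  assert (0 < (mu S1 - lam S1) * (mu S2 - lam S2) * y) by (apply Rmult_lt_0_compat; nra).
  assert (0 < lam S1 * lam S2) by nra.
  assert (0 < lam S3 * mu S1) by nra.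
  destruct l; unfold emb, Defs.f, e, theta, lamsum; simpl; field; nzs.
Qed.

Lemma id3 (lam mu : side -> R) y : (forall i, 0 < lam i) -> (forall i, lam i < mu i) -> 0 < y ->
  forall l, emb (S3, ((mu S3 - lam S3) + lam S2 * y) / ((mu S3 - lam S3) + (lam S1 + lam S2) * y)) l
            = Defs.f lam mu S3 (emb (S1, y / (1 + y))) l.
Proof. intros Hl Hm Hy l.
  pose proof (Hl S1). pose proof (Hl S2). pose proof (Hl S3).
  pose proof (Hm S1). pose proof (Hm S2). pose proof (Hm S3).
  assert (0 < (mu S3 - lam S3) * y) by (apply Rmult_lt_0_compat; lra).
  assert (0 < lam S1 * y) by nra. assert (0 < lam S2 * y) by nra.
  destruct l; unfold emb, Defs.f, e, theta, lamsum; simpl; field; nzs.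
Qed.

Lemma id4 (lam mu : side -> R) y : (forall i, 0 < lam i) -> (forall i, lam i < mu i) -> 0 < y ->
  let By := y / ((mu S1 - lam S1) * (mu S3 - lam S3) / (lam S1 * lam S3) + lam S2 * mu S1 / (lam S1 * lam S3) * y) in
  forall l, emb (S1, By / (1 + By)) l
            = Defs.f lam mu S1 (emb (S3, ((mu S3 - lam S3) + lam S2 * y) / ((mu S3 - lam S3) + (lam S1 + lam S2) * y))) l.
Proof. intros Hl Hm Hy By l. unfold By.
  pose proof (Hl S1). pose proof (Hl S2). pose proof (Hl S3).
  pose proof (Hm S1). pose proof (Hm S2). pose proof (Hm S3).
  assert (0 < (mu S3 - lam S3) * y) by (apply Rmult_lt_0_compat; lra).
  assert (0 < lam S1 * y) by nra. assert (0 < lam S2 * y) by nra.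
  assert (0 < (mu S1 - lam S1) * (mu S3 - lam S3)) by nra.
  assert (0 < lam S1 * lam S3) by nra.
  assert (0 < lam S2 * mu S1 * y) by (apply Rmult_lt_0_compat; nra).
  destruct l; unfold emb, Defs.f, e, theta, lamsum; simpl; field; nzs.
Qed.

Definition pp (lam mu : side -> R) : P :=
  mkP ((mu S1 - lam S1) * (mu S2 - lam S2) / (lam S1 * lam S2))
      (lam S3 * mu S1 / (lam S1 * lam S2))
      ((mu S1 - lam S1) * (mu S3 - lam S3) / (lam S1 * lam S3))
      (lam S2 * mu S1 / (lam S1 * lam S3)).

Lemma pp_good lam mu : (forall i, 0 < lam i) -> (forall i, lam i < mu i) -> good (pp lam mu).
Proof. intros Hl Hm.
  pose proof (Hl S1). pose proof (Hl S2). pose proof (Hl S3).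
  pose proof (Hm S1). pose proof (Hm S2). pose proof (Hm S3).
  unfold good, pp; simpl. repeat split.
  - apply Rdiv_lt_0_compat; nra.
  - apply Rdiv_lt_0_compat; nra.
  - apply Rdiv_lt_0_compat; nra.
  - apply Rdiv_lt_0_compat; nra.
  - replace (lam S3 * mu S1 / (lam S1 * lam S2) * (lam S2 * mu S1 / (lam S1 * lam S3)))
      with ((mu S1 / lam S1) * (mu S1 / lam S1)) by (field; lra).
    assert (1 < mu S1 / lam S1).
    { apply Rmult_lt_reg_r with (lam S1); auto. replace (mu S1 / lam S1 * lam S1) with (mu S1) by (field; lra). lra. }
    nra.
Qed.

Definition Xf (y : R) : R := y / (1 + y).
Definition x2f (lam mu : side -> R) (y : R) : R := lam S1 / ((mu S2 - lam S2) * y + lamsum lam - lam S2).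
Definition x3f (lam mu : side -> R) (y : R) : R :=
  ((mu S3 - lam S3) + lam S2 * y) / ((mu S3 - lam S3) + (lam S1 + lam S2) * y).

Lemma Xf_bounds y : 0 < y -> 0 < Xf y < 1.
Proof. intros Hy. unfold Xf. split. apply Rdiv_lt_0_compat; lra.
  apply Rmult_lt_reg_r with (1 + y). lra. replace (y / (1 + y) * (1 + y)) with y by (field; lra). lra. Qed.

Lemma Xf_lt y c : 0 < y -> 0 < c -> (y < c <-> Xf y < Xf c).
Proof. intros Hy Hc. unfold Xf.
  assert (E : y / (1 + y) - c / (1 + c) = (y - c) / ((1 + y) * (1 + c))) by (field; lra).
  assert (Hpos : 0 < (1 + y) * (1 + c)) by nra.
  split; intros Hlt.
  - assert ((y - c) / ((1 + y) * (1 + c)) < 0).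
    { unfold Rdiv. apply Rmult_neg_pos. lra. apply Rinv_0_lt_compat; auto. }
    lra.
  - destruct (Rlt_or_le y c); auto. exfalso.
    assert (0 <= (y - c) / ((1 + y) * (1 + c))).
    { unfold Rdiv. apply Rmult_le_pos. lra. left; apply Rinv_0_lt_compat; auto. }
    lra.
Qed.

Lemma x2_bounds lam mu y ymax : (forall i, 0 < lam i) -> (forall i, lam i < mu i) -> 0 < y -> y <= ymax ->
  0 < x2f lam mu y < 1 /\ x2f lam mu ymax <= x2f lam mu y.
Proof. intros Hl Hm Hy Hym. unfold x2f, lamsum.
  pose proof (Hl S1). pose proof (Hl S2). pose proof (Hl S3).
  pose proof (Hm S1). pose proof (Hm S2). pose proof (Hm S3).
  assert (0 < (mu S2 - lam S2) * y) by (apply Rmult_lt_0_compat; lra).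
  assert ((mu S2 - lam S2) * y <= (mu S2 - lam S2) * ymax) by (apply Rmult_le_compat_l; lra).
  split. split.
  - apply Rdiv_lt_0_compat; lra.
  - apply Rmult_lt_reg_r with ((mu S2 - lam S2) * y + (lam S1 + lam S2 + lam S3) - lam S2). lra.
    replace (lam S1 / ((mu S2 - lam S2) * y + (lam S1 + lam S2 + lam S3) - lam S2) *
      ((mu S2 - lam S2) * y + (lam S1 + lam S2 + lam S3) - lam S2)) with (lam S1) by (field; lra). lra.
  - apply div_le; nra.
Qed.

Lemma x3_bounds lam mu y ymin : (forall i, 0 < lam i) -> (forall i, lam i < mu i) -> 0 < ymin -> ymin <= y ->
  0 < x3f lam mu y < 1 /\
  x3f lam mu y <= 1 - lam S1 * ymin / ((mu S3 - lam S3) + (lam S1 + lam S2) * ymin) /\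
  0 < lam S1 * ymin / ((mu S3 - lam S3) + (lam S1 + lam S2) * ymin) < 1.
Proof. intros Hl Hm Hy Hym. unfold x3f.
  pose proof (Hl S1). pose proof (Hl S2). pose proof (Hl S3).
  pose proof (Hm S1). pose proof (Hm S2). pose proof (Hm S3).
  assert (0 < lam S1 * ymin) by nra. assert (0 < lam S2 * ymin) by nra.
  assert (0 < lam S1 * y) by nra. assert (0 < lam S2 * y) by nra.
  assert (D1 : 0 < (mu S3 - lam S3) + (lam S1 + lam S2) * y) by nra.
  assert (D2 : 0 < (mu S3 - lam S3) + (lam S1 + lam S2) * ymin) by nra.
  assert (E : ((mu S3 - lam S3) + lam S2 * y) / ((mu S3 - lam S3) + (lam S1 + lam S2) * y)
     = 1 - lam S1 * y / ((mu S3 - lam S3) + (lam S1 + lam S2) * y)) by (field; lra).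
  assert (G1 : 0 < lam S1 * y / ((mu S3 - lam S3) + (lam S1 + lam S2) * y) < 1).
  { split. apply Rdiv_lt_0_compat; lra.
    apply Rmult_lt_reg_r with ((mu S3 - lam S3) + (lam S1 + lam S2) * y). lra.
    replace (lam S1 * y / ((mu S3 - lam S3) + (lam S1 + lam S2) * y) * ((mu S3 - lam S3) + (lam S1 + lam S2) * y))
      with (lam S1 * y) by (field; lra). nra. }
  assert (G2 : 0 < lam S1 * ymin / ((mu S3 - lam S3) + (lam S1 + lam S2) * ymin) < 1).
  { split. apply Rdiv_lt_0_compat; lra.
    apply Rmult_lt_reg_r with ((mu S3 - lam S3) + (lam S1 + lam S2) * ymin). lra.
    replace (lam S1 * ymin / ((mu S3 - lam S3) + (lam S1 + lam S2) * ymin) * ((mu S3 - lam S3) + (lam S1 + lam S2) * ymin))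
      with (lam S1 * ymin) by (field; lra). nra. }
  assert (G3 : lam S1 * ymin / ((mu S3 - lam S3) + (lam S1 + lam S2) * ymin)
            <= lam S1 * y / ((mu S3 - lam S3) + (lam S1 + lam S2) * y)).
  { apply div_le; try lra.
    assert (0 <= lam S1 * (mu S3 - lam S3) * (y - ymin)) by (apply Rmult_le_pos; nra). nra. }
  rewrite E. split. lra. split. lra. auto.
Qed.


Definition yyf (lam mu : side -> R) (c : R) (n : nat) : R := orb (pp lam mu) c (Bf (pp lam mu) c) n.

Definition zz (lam mu : side -> R) (c : R) (t : nat) : state :=
  let y := yyf lam mu c (Nat.div2 t) in
  if Nat.even t then (S1, Xf y)
  else if Rlt_dec y c then (S2, x2f lam mu y) else (S3, x3f lam mu y).

Lemma zz_even lam mu c n : zz lam mu c (2 * n) = (S1, Xf (yyf lam mu c n)).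
Proof. unfold zz. rewrite Nat.even_mul, Nat.div2_double. reflexivity. Qed.

Lemma zz_odd lam mu c n : zz lam mu c (S (2 * n)) =
  if Rlt_dec (yyf lam mu c n) c then (S2, x2f lam mu (yyf lam mu c n)) else (S3, x3f lam mu (yyf lam mu c n)).
Proof. unfold zz. rewrite Nat.even_succ, Nat.odd_mul, Nat.div2_succ_double. reflexivity. Qed.

Theorem theorem3p3 (lam mu : side -> R) :
  (forall i, 0 < lam i) -> (forall i, 0 < mu i) ->
  (forall i, lam i / mu i < 1) ->
  lam S1 / mu S1 + lam S2 / mu S2 + lam S3 / mu S3 > 1 ->
  exists DS : R * R * R -> Prop,
    uncountable_set DS /\
    forall d, DS d ->
      (forall i, 0 < dfun d i < 1) /\
      exists z : nat -> state, trajectory lam mu (dfun d) z /\ nonperiodic z.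
Proof.
  intros Hl Hmu Hr _.
  assert (Hm : forall i, lam i < mu i).
  { intros i. specialize (Hr i). specialize (Hmu i).
    replace (lam i) with (lam i / mu i * mu i) by (field; lra). nra. }
  pose (p := pp lam mu).
  assert (Hg : good p) by (apply pp_good; auto).
  destruct (rho_clo p Hg) as [Dclo _].
  assert (Hclo : 0 < clo p) by (destruct Dclo; auto).
  pose (ymin := Bf p (clo p)).
  pose (ymax := Af p (chi p)).
  assert (Hymin : 0 < ymin) by (apply Bf_pos; auto).
  pose (d2 := x2f lam mu ymax / 2).
  pose (gg := lam S1 * ymin / ((mu S3 - lam S3) + (lam S1 + lam S2) * ymin)).
  pose (d3 := 1 - gg / 2).
  assert (Hgg : 0 < gg < 1).
  { destruct (x3_bounds lam mu ymin ymin Hl Hm Hymin ltac:(lra)) as [_ [_ H]]. exact H. }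
  assert (Hymax : 0 < ymax).
  { unfold ymax. pose proof (clo_lt_chi p Hg). pose proof Hg as [Ha [Hb _]]. unfold Af. nra. }
  assert (Hd2 : 0 < x2f lam mu ymax < 1).
  { destruct (x2_bounds lam mu ymax ymax Hl Hm Hymax ltac:(lra)) as [H _]. exact H. }
  exists (fun t => exists c, clo p <= c <= chi p /\ (forall q m', rho p c <> INR q / INR (S m'))
                        /\ t = (Xf c, d2, d3)).
  split.
  - intros [g0 Hg0].
    pose (h := fun n => match Cantor.of_nat n with
                        | (O, j) => rho p (fst (fst (g0 j)) / (1 - fst (fst (g0 j))))
                        | (S i, j) => INR i / INR (S j) end).
    destruct (uncount h (1/4) (3/5)) as [r [Hr1 Hr2]]. lra.
    destruct (classic (exists q m', r = INR q / INR (S m'))) as [[q [m' Hq]]|Hnq].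
    + apply (Hr2 (Cantor.to_nat (S q, m'))). unfold h. rewrite Cantor.cancel_of_to. auto.
    + destruct (ivt_rho p r Hg ltac:(lra)) as [c [Hc Hrc]].
      destruct (Hg0 (Xf c, d2, d3)) as [j Hj].
      { exists c. split; auto. split; auto. intros q m' E. apply Hnq. exists q, m'. rewrite <- Hrc; auto. }
      apply (Hr2 (Cantor.to_nat (O, j))). unfold h. rewrite Cantor.cancel_of_to. rewrite Hj. simpl.
      replace (Xf c / (1 - Xf c)) with c. auto. unfold Xf. field. split; lra.
  - intros d [c [Hc [Hirr ->]]].
    assert (Dc : Dom p c) by (apply (Dom_up p (clo p)); tauto).
    split.
    { intros i. destruct i; simpl.
      - apply Xf_bounds; lra.
      - unfold d2. lra.
      - unfold d3. lra. }
    assert (Yin : forall n, Bf p c <= yyf lam mu c n < Af p c).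
    { intros n. apply orb_inv; auto. apply b_in; auto. }
    assert (Ymin : forall n, ymin <= yyf lam mu c n).
    { intros n. pose proof (Yin n). assert (ymin <= Bf p c) by (apply Bf_monole; auto; lra). lra. }
    assert (Ymax : forall n, yyf lam mu c n < ymax).
    { intros n. pose proof (Yin n). assert (Af p c <= ymax).
      { unfold ymax. destruct (Rle_lt_or_eq_dec _ _ (proj2 Hc)) as [h|h].
        left; apply Af_mono; auto. rewrite h; lra. }
      lra. }
    assert (Ypos : forall n, 0 < yyf lam mu c n) by (intros n; pose proof (Ymin n); lra).
    assert (Hc0 : 0 < c) by lra.
    exists (zz lam mu c). split. split.
    + intros t. destruct (Nat.Even_or_Odd t) as [[n ->]|[n ->]].
      * rewrite zz_even. simpl. pose proof (Xf_bounds _ (Ypos n)). lra.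
      * rewrite Nat.add_1_r, zz_odd. destruct (Rlt_dec _ _); simpl.
        -- destruct (x2_bounds lam mu (yyf lam mu c n) ymax Hl Hm (Ypos n) (Rlt_le _ _ (Ymax n))) as [H _]. lra.
        -- destruct (x3_bounds lam mu (yyf lam mu c n) ymin Hl Hm Hymin (Ymin n)) as [H _]. lra.
    + intros t. destruct (Nat.Even_or_Odd t) as [[n ->]|[n ->]].
      * rewrite zz_even, zz_odd. destruct (Rlt_dec (yyf lam mu c n) c) as [Hlt|Hge].
        -- exists S2. split.
           ++ unfold rule. simpl. left. split; auto. apply (proj1 (Xf_lt _ _ (Ypos n) Hc0)); auto.
           ++ intros l. exact (id1 lam mu (yyf lam mu c n) Hl Hm (Ypos n) l).
        -- exists S3. split.
           ++ unfold rule. simpl. right.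
              destruct (Req_dec (yyf lam mu c n) c) as [E|E].
              ** right. split. rewrite E; auto. right; auto.
              ** left. split; auto. apply (proj1 (Xf_lt _ _ Hc0 (Ypos n))). lra.
           ++ intros l. exact (id3 lam mu (yyf lam mu c n) Hl Hm (Ypos n) l).
      * rewrite Nat.add_1_r, zz_odd.
        replace (S (S (2 * n))) with (2 * S n)%nat by lia. rewrite zz_even.
        assert (Ey : yyf lam mu c (S n) = T p c (yyf lam mu c n)) by reflexivity.
        destruct (Rlt_dec (yyf lam mu c n) c) as [Hlt|Hge].
        -- exists S1. split.
           ++ unfold rule. simpl. right. left. split; auto.
              destruct (x2_bounds lam mu (yyf lam mu c n) ymax Hl Hm (Ypos n) (Rlt_le _ _ (Ymax n))) as [_ H].
              unfold d2. lra.
           ++ intros l. rewrite Ey, T_A by auto.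
              exact (id2 lam mu (yyf lam mu c n) Hl Hm (Ypos n) l).
        -- exists S1. split.
           ++ unfold rule. simpl. left. split; auto.
              destruct (x3_bounds lam mu (yyf lam mu c n) ymin Hl Hm Hymin (Ymin n)) as [_ [H _]].
              fold gg in H. unfold d3. lra.
           ++ intros l. rewrite Ey, T_B by lra.
              exact (id4 lam mu (yyf lam mu c n) Hl Hm (Ypos n) l).
    + intros m Hm1 [N0 HN]. unfold Side in HN.
      destruct (Nat.Even_or_Odd m) as [[k ->]|[k ->]].
      * destruct (per_rat p c N0 k Hg Dc ltac:(lia)) as [q [m' E]].
        { intros j Hj. specialize (HN (S (2 * j)) ltac:(lia)).
          replace (S (2 * j) + 2 * k)%nat with (S (2 * (j + k))) in HN by lia.
          rewrite !zz_odd in HN. unfold yyf in HN. change (pp lam mu) with p in HN. unfold isB.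
          destruct (Rlt_dec (orb p c (Bf p c) (j + k)) c);
          destruct (Rlt_dec (orb p c (Bf p c) j) c); simpl in HN;
          try discriminate; reflexivity. }
        exact (Hirr q m' E).
      * specialize (HN (2 * N0)%nat ltac:(lia)).
        replace (2 * N0 + (2 * k + 1))%nat with (S (2 * (N0 + k))) in HN by lia.
        rewrite zz_odd, zz_even in HN. destruct (Rlt_dec _ _); simpl in HN; discriminate.
Qed.
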